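(* Let $A\subseteq\mathbb{N}$ be a sum-dominant set with $|A|=6$. If there exist distinct $m_1, m_2, m_3\in A$ such that $m_2-m_1 = m_3-m_2$, then $A-A$ contains at most $7$ distinct positive elements.
   Context: For a finite set $A\subseteq\mathbb{N}$, the sum set is $A+A=\{a_i+a_j : a_i,a_j\in A\}$ and the difference set is $A-A=\{a_i-a_j : a_i,a_j\in A\}$. The set $A$ is called sum-dominant if $|A+A|>|A-A|$. *)

(* Defs.v *)
From HB Require Import structures.
From mathcomp Require Import all_boot all_order all_algebra.
From mathcomp Require Import finmap.
Set Implicit Arguments. Unset Strict Implicit. Unset Printing Implicit Defensive.
Import Order.TTheory GRing.Theory Num.Theory.
Local Open Scope fset_scope.

Definition sumset (A : {fset nat}) : {fset nat} :=
  [fset (a + b)%N | a in A, b in A].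

(* Difference set A - A = { a_i - a_j : a_i, a_j in A }, taken in the
   integers (true subtraction, not truncated). *)
Definition diffset (A : {fset nat}) : {fset int} :=
  [fset ((a%:Z) - (b%:Z))%R | a in A, b in A].

Definition sum_dominant (A : {fset nat}) : Prop :=
  (#|` diffset A| < #|` sumset A|)%N.

(* Main.v *)
Require Import Defs.
From HB Require Import structures.
From mathcomp Require Import all_boot all_order all_algebra.
From mathcomp Require Import finmap.
From mathcomp Require Import zify.
Import Order.TTheory GRing.Theory Num.Theory.
Local Open Scope fset_scope.
Set Implicit Arguments. Unset Strict Implicit. Unset Printing Implicit Defensive.

Lemma part_sum (X : finType) (V : eqType) (f : X -> V) (s : seq V)
  (G : X -> nat) : uniq s -> (forall x, f x \in s) ->
  \sum_x G x = \sum_(v <- s) \sum_(x | f x == v) G x.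
Proof.
move=> us fs.
rewrite (exchange_big_dep xpredT) //=.
apply: eq_bigr => x _.
rewrite big_const_seq.
have -> : count (fun v => f x == v) s = 1%N.
  rewrite (eq_count (a2 := pred1 (f x))); last by move=> v /=; rewrite eq_sym.
  by rewrite count_uniq_mem // fs.
by rewrite /= addn0.
Qed.

Definition fib {X : finType} {V : eqType} (f : X -> V) (v : V) :=
  #|[set x | f x == v]|.

Lemma part_card (X : finType) (V : eqType) (f : X -> V) (s : seq V) :
  uniq s -> (forall x, f x \in s) ->
  #|X| = \sum_(v <- s) fib f v.
Proof.
move=> us fs; rewrite -sum1_card (part_sum (fun=> 1%N) us fs).
apply: eq_bigr => v _; rewrite /fib -sum1_card; apply: eq_bigl => x.
by rewrite inE.
Qed.

Lemma energy (X : finType) (V : eqType) (f : X -> V) (s : seq V) :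
  uniq s -> (forall x, f x \in s) ->
  #|[set q : X * X | f q.1 == f q.2]| = \sum_(v <- s) fib f v ^ 2.
Proof.
move=> us fs.
rewrite -sum1_card.
transitivity (\sum_(q : X * X) ((f q.1 == f q.2) : nat)).
  by rewrite big_mkcond /=; apply: eq_bigr => q _; rewrite inE; case: ifP.
rewrite -(pair_big xpredT xpredT (fun x y => ((f x == f y) : nat))) /=.
transitivity (\sum_x fib f (f x)).
  apply: eq_bigr => x _; rewrite /fib -sum1_card [RHS]big_mkcond /=.
  by apply: eq_bigr => y _; rewrite inE eq_sym; case: ifP.
rewrite (part_sum (fun x => fib f (f x)) us fs).
apply: eq_bigr => v _.
transitivity (\sum_(x | f x == v) fib f v).
  by apply: eq_bigr => x /eqP ->.
rewrite sum_nat_const /fib.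
have -> : #|[pred x | f x == v]| = #|[set x | f x == v]|.
  by apply: eq_card => x; rewrite inE.
by rewrite mulnn.
Qed.

Section Main.
Variable A : {fset nat}.
Definition fs (p : A * A) : nat := val p.1 + val p.2.
Definition fd (p : A * A) : int := ((val p.1)%:Z - (val p.2)%:Z)%R.

Lemma fs_in p : fs p \in sumset A.
Proof. by rewrite /fs /sumset; apply: in_imfset2 => /=. Qed.

Lemma fd_in p : fd p \in diffset A.
Proof. by rewrite /fd /diffset; apply: in_imfset2 => /=. Qed.

Lemma cardT : #|{: A}| = #|` A|.
Proof. by rewrite cardfE. Qed.

Lemma energy_eq :
  #|[set q : (A * A) * (A * A) | fs q.1 == fs q.2]| =
  #|[set q : (A * A) * (A * A) | fd q.1 == fd q.2]|.
Proof.
pose h (q : (A * A) * (A * A)) := ((q.1.1, q.2.2), (q.2.1, q.1.2)).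
have hinj : injective h.
  by move=> [[x y] [z w]] [[x' y'] [z' w']] [] -> -> -> ->.
rewrite -!sum1_card (reindex_inj hinj).
apply: eq_bigl => -[[x y] [z w]]; rewrite !inE /fs /fd /=.
apply/eqP/eqP; move: (val x : nat) (val y : nat) (val z : nat) (val w : nat) => a b c d; lia.
Qed.

Lemma sum_const_seq (T : Type) (s : seq T) (c : nat) :
  \sum_(v <- s) c = c * size s.
Proof. by rewrite big_const_seq count_predT iter_addn_0. Qed.

Lemma sum_eq_seq (T : eqType) (s : seq T) (x : T) : uniq s ->
  \sum_(v <- s) ((v == x) : nat) = (x \in s).
Proof.
move=> us; rewrite -(count_uniq_mem _ us) -sum1_count [RHS]big_mkcond /=.
by apply: eq_bigr => v _; case: eqP.
Qed.

Hypothesis A6 : #|` A| = 6.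

Lemma cardX : #|{: A * A}| = 36.
Proof. by rewrite card_prod cardT A6. Qed.

Lemma fib0 : fib fd 0%R = 6.
Proof.
rewrite /fib -sum1_card.
transitivity (\sum_(p : A * A) ((p.1 == p.2) : nat)).
  rewrite big_mkcond /=; apply: eq_bigr => -[x y] _; rewrite inE /fd /=.
  have -> : (((val x)%:Z - (val y)%:Z)%R == 0%R) = (x == y).
    apply/eqP/eqP => [h|->]; last by rewrite subrr.
    by apply: val_inj; move: (val x : nat) (val y : nat) h => a b h; lia.
  by case: eqP.
rewrite -(pair_big xpredT xpredT (fun x y => ((x == y) : nat))) /=.
transitivity (\sum_(x : A) 1).
  apply: eq_bigr => x _; rewrite (bigD1 x) //= eqxx big1 // => y /negbTE.
  by rewrite eq_sym => ->.
by rewrite sum1_card cardT A6.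
Qed.

Lemma diff_side :
  128 <= #|[set q : (A * A) * (A * A) | fd q.1 == fd q.2]| + 2 * #|` diffset A|.
Proof.
have us := fset_uniq (diffset A).
have fsin : forall p, fd p \in enum_fset (diffset A) by move=> p; exact: fd_in.
rewrite (energy us fsin).
have h36 := part_card us fsin; rewrite cardX in h36.
have h0 : \sum_(v <- enum_fset (diffset A)) ((v == 0%R) : nat) = 1.
  rewrite sum_eq_seq //.
  have : (0 < #|{: A}|)%N by rewrite cardT A6.
  case/card_gt0P => x _.
  have -> : (0 = fd (x, x))%R by rewrite /fd subrr.
  by rewrite fd_in.
have key : \sum_(v <- enum_fset (diffset A)) (3 * fib fd v + 20 * (v == 0%R))
   <= \sum_(v <- enum_fset (diffset A)) (fib fd v ^ 2 + 2).
  apply: leq_sum => v _.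
  case: eqP => [->|_]; first by rewrite fib0.
  rewrite muln0 addn0; move: (fib fd v) => n.
  case: n => [|[|[|n]]] //; rewrite expnS expn1.
  apply: leq_trans (leq_addr _ _); exact: (leq_mul (_ : 3 <= n.+3) (leqnn _)).
rewrite big_split /= -!big_distrr /= h0 -h36 in key.
rewrite big_split /= sum_const_seq in key.
move: key; rewrite /=.
by [].
Qed.

Lemma pw u e : (1 <= 2*u+e <= 5)%N -> ((2*u+e)^2 + 8 <= 6*(2*u+e) + 3*e)%N.
Proof.
move=> /andP[h1 h2]; have hu : (u <= 2)%N by lia.
have he : (e <= 5)%N by lia.
by move: u e hu he h1 h2 => [|[|[|u]]] [|[|[|[|[|[|e]]]]]].
Qed.

Lemma fib_le6 v : fib fs v <= 6.
Proof.
rewrite /fib -(@card_in_imset _ _ fst); last first.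
  move=> [x y] [x' y']; rewrite !inE /fs /= => /eqP h /eqP h' ex.
  rewrite ex; congr pair; apply: val_inj; rewrite ex in h.
  by apply/eqP; rewrite -(eqn_add2l (val x')) h h'.
by rewrite -A6 -cardT max_card.
Qed.

Lemma fib_ge1 v : v \in sumset A -> 1 <= fib fs v.
Proof.
case/imfset2P => a /= aA [b /= bA ->].
apply/card_gt0P; exists ([` aA], [` bA]); by rewrite inE.
Qed.

Lemma fib6 v : fib fs v = 6 -> #|` sumset A| <= #|` diffset A|.
Proof.
move=> h6.
have hall : forall x : A, exists y : A, (val x + val y)%N = v.
  move=> x.
  have : x \in [set p.1 | p in [set p : A * A | fs p == v]].
    suff -> : [set p.1 | p in [set p : A * A | fs p == v]] = setT by [].
    apply/eqP; rewrite eqEcard subsetT cardsT cardT A6.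
    rewrite (@card_in_imset _ _ fst); first by move: h6; rewrite /fib => ->.
    move=> [x1 y] [x' y']; rewrite !inE /fs /= => /eqP h /eqP h' ex.
    rewrite ex; congr pair; apply: val_inj; rewrite ex in h.
  by apply/eqP; rewrite -(eqn_add2l (val x')) h h'.
  by case/imsetP => -[x' y]; rewrite inE /fs => /eqP h /= ->; exists y.
pose g (w : nat) : int := (w%:Z - v%:Z)%R.
have ginj : injective g by move=> a b; rewrite /g => h; apply/eqP; move: h; lia.
have hc : #|` g @` sumset A| = #|` sumset A|.
  by apply/eqP/card_in_imfsetP => x y _ _; apply: ginj.
rewrite -hc; apply: fsubset_leq_card; apply/fsubsetP => z /imfsetP [w /= wS ->].
case/imfset2P: wS => a /= aA [b /= bA ->].
have [y hy] := hall [` bA].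
rewrite /diffset; apply/imfset2P; exists a => //; exists (val y); first exact: fsvalP.
rewrite /g -hy /=; move: (val y : nat) => c; lia.
Qed.

Definition ee v := \sum_(x : A | (val x + val x)%N == v) 1.

Lemma parity v : exists u, fib fs v = (2 * u + ee v)%N.
Proof.
pose F (p : A * A) := ((fs p == v) : nat).
have hR : fib fs v = \sum_p F p.
  rewrite /fib -sum1_card big_mkcond /=; apply: eq_bigr => p _.
  by rewrite inE /F; case: eqP.
pose lt (p : A * A) := (val p.1 < val p.2)%N.
pose gt (p : A * A) := (val p.2 < val p.1)%N.
exists (\sum_(p | lt p) F p).
rewrite hR (bigID lt) /= [X in (_ + X)%N](bigID gt) /=.
have e1 : \sum_(p | ~~ lt p && gt p) F p = \sum_(p | lt p) F p.
  have sinj : injective (fun p : A * A => (p.2, p.1)) by move=> [? ?] [? ?] [-> ->].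
  rewrite (reindex_inj sinj) /=.
  apply: eq_big => -[x y] /=; first by rewrite /lt /gt /=; case: ltngtP.
  by move=> _; rewrite /F /fs /= addnC.
have e2 : \sum_(p | ~~ lt p && ~~ gt p) F p = ee v.
  transitivity (\sum_(p | p.1 == p.2) F p).
    apply: eq_bigl => -[x y]; rewrite /lt /gt /=.
    rewrite -val_eqE /=; case: ltngtP => //.
  rewrite -(pair_big_dep xpredT (fun x y => x == y) (fun x y => F (x, y))) /=.
  rewrite /ee [RHS]big_mkcond /=; apply: eq_bigr => x _.
  rewrite (big_pred1 x); last by move=> y; rewrite /= eq_sym.
  by rewrite /F /fs /=; case: eqP.
by rewrite e1 e2 addnA addnn -mul2n.
Qed.

Lemma ee_sum : \sum_(v <- enum_fset (sumset A)) ee v = 6.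
Proof.
have fsin : forall x : A, (val x + val x)%N \in enum_fset (sumset A).
  by move=> x; exact: (fs_in (x, x)).
have := part_sum (fun _ : A => 1%N) (fset_uniq _) fsin.
by rewrite sum1_card cardT A6 => ->.
Qed.

Lemma sum_side : (forall v, v \in sumset A -> fib fs v != 6) ->
  #|[set q : (A * A) * (A * A) | fs q.1 == fs q.2]| + 8 * #|` sumset A| <= 234.
Proof.
move=> hn6.
have us := fset_uniq (sumset A).
have fsin : forall p, fs p \in enum_fset (sumset A) by move=> p; exact: fs_in.
rewrite (energy us fsin).
have h36 := part_card us fsin; rewrite cardX in h36.
have key : \sum_(v <- enum_fset (sumset A)) (fib fs v ^ 2 + 8)
   <= \sum_(v <- enum_fset (sumset A)) (6 * fib fs v + 3 * ee v).
  rewrite big_seq [X in _ <= X]big_seq; apply: leq_sum => v vin.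
  have [u hu] := parity v.
  have h1 := fib_ge1 vin.
  have h5 : fib fs v <= 5.
    by have := fib_le6 v; have := hn6 v vin; rewrite leq_eqVlt => /negbTE ->.
  rewrite hu; apply: pw; rewrite -hu h1 h5 //.
rewrite [X in X <= _]big_split [X in _ <= X]big_split /= -!big_distrr /= ee_sum -h36 sum_const_seq in key.
idtac.
move: key; rewrite mulnC; exact.
Qed.

Lemma pos_bound :
  (2 * #|` [fset d in diffset A | (0 < d)%R]| + 1 <= #|` diffset A|)%N.
Proof.
set Pp := [fset d in diffset A | (0 < d)%R].
set Pn := [fset (- d)%R | d in Pp].
have hn : #|` Pn| = #|` Pp|.
  by apply/eqP/card_in_imfsetP => x y _ _; apply: oppr_inj.
have negD : forall d, d \in diffset A -> (- d)%R \in diffset A.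
  move=> d /imfset2P [a /= aA [b /= bA ->]].
  by apply/imfset2P; exists b => //; exists a => //; rewrite opprB.
have d1 : Pp `&` Pn = fset0.
  apply/fsetP => z; rewrite in_fsetI in_fset0; apply/negP => /andP [h1 h2].
  move: h1; rewrite !inE => /andP [_ hz].
  case/imfsetP: h2 => d /=; rewrite !inE => /andP [_ hd] hz'.
  by move: hz hd; rewrite hz' oppr_gt0 => /ltW; rewrite leNgt => /negbTE ->.
have d2 : (Pp `|` Pn) `&` [fset 0%R] = fset0.
  apply/fsetP => z; rewrite in_fsetI in_fset0 in_fset1; apply/negP => /andP [h1 /eqP hz].
  subst z; case/fsetUP: h1 => [|/imfsetP [d /=]]; rewrite !inE ?ltxx ?andbF //.
  by move=> /andP [_ hd] /eqP; rewrite eq_sym oppr_eq0 => /eqP hd0; rewrite hd0 ltxx in hd.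
have sub : (Pp `|` Pn) `|` [fset 0%R] `<=` diffset A.
  apply/fsubsetP => z; case/fsetUP => [/fsetUP [|]|]; rewrite ?inE.
  - by case/andP.
  - by case/imfsetP => d /=; rewrite !inE => /andP [hd _] ->; exact: negD.
  - move/eqP => ->; have : (0 < #|{: A}|)%N by rewrite cardT A6.
    case/card_gt0P => x _.
    have -> : (0 = fd (x, x))%R by rewrite /fd subrr.
    exact: fd_in.
have := fsubset_leq_card sub.
have := cardfsUI (Pp `|` Pn) [fset 0%R]; rewrite d2 cardfs1 cardfs0.
have := cardfsUI Pp Pn; rewrite d1 cardfs0 hn.
lia.
Qed.
End Main.

Theorem lemma4 (A : {fset nat}) :
  sum_dominant A ->
  #|` A| = 6%N ->
  (exists m1 m2 m3 : nat,
     [/\ m1 \in A, m2 \in A, m3 \in A,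
         [/\ m1 != m2, m2 != m3 & m1 != m3] &
         ((m2%:Z - m1%:Z) = (m3%:Z - m2%:Z))%R]) ->
  (#|` [fset d in diffset A | (0 < d)%R]| <= 7)%N.
Proof.
move=> sd A6 _.
have hd := diff_side A6.
have hp := pos_bound A6.
rewrite -energy_eq in hd.
move: sd; rewrite /sum_dominant => sd.
case: (boolP (has (fun v => fib (fs (A:=A)) v == 6) (enum_fset (sumset A)))).
  case/hasP => v vin /eqP h6.
  have := fib6 A6 h6; lia.
move/hasPn => hn.
have hs := sum_side A6 hn.
lia.
Qed.
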